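(* There exist absolute constants $\kappa_D>0$ and $C>0$ such that, for diffusive deposition, every configuration $\sigma\in\mathbb N^N$ with $|\sigma|<N/2$ and every $i\in G_N$, $$P\big(\text{explorer attaches to pile } i\,\big|\,\sigma\big)\ge\kappa_D\frac{\sigma_i^2+1}{N}\exp\Big(-\frac3N\Big(\sum_{j=1}^N\sigma_j(\sigma_j+1)\Big)\Big(1+C\frac{|\sigma|}{N}\Big)\Big).$$
   Context: Diffusive deposition: for $N\ge2$, $G_N=\{1,\dots,N\}$, a configuration $\sigma\in\mathbb N^N$ gives column (pile) heights, $|\sigma|=\sum_i\sigma_i$. Given $\sigma$, an explorer is a walk $(X_n,Z_n)_{n\ge0}$ with $(X_n)$ i.i.d. uniform on $G_N$, $Z_0=\max_i\sigma_i+1$, and $(Z_{n+1}-Z_n)$ i.i.d. uniform on $\{-1,1\}$ independent of $(X_n)$. With $n^*=\inf\{n:Z_n\le\sigma_{X_n}\}$, the explorer attaches to pile $X_{n^*}$ (whose height then increases by one). *)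

(* Defs.v *)
From Stdlib Require Import Reals ZArith.
Open Scope R_scope.

(* Piles are indexed 0 .. N-1 (pile k here = pile k+1 of the paper).
   A configuration is sigma : nat -> nat, only sigma 0 .. sigma (N-1) matter. *)

Fixpoint rsum (n : nat) (f : nat -> R) : R :=
  match n with O => 0 | S k => rsum k f + f k end.

(* nsum n f = f 0 + ... + f (n-1) in nat;  |sigma| = nsum N sigma *)
Fixpoint nsum (n : nat) (f : nat -> nat) : nat :=
  match n with O => O | S k => (nsum k f + f k)%nat end.

Fixpoint nmax (n : nat) (f : nat -> nat) : nat :=
  match n with O => O | S k => Nat.max (nmax k f) (f k) end.

Definition explorer_start (N : nat) (sigma : nat -> nat) : Z :=
  (Z.of_nat (nmax N sigma) + 1)%Z.

(* attach_within N sigma i T z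
   = P( n* <= T and X_{n*} = i ) for the explorer whose vertical walk is at
   height z at time 0 (with z > max sigma, so no attachment at time 0).
   It is the exact probability, i.e. the uniform average over the 2^T N^T
   equally likely step sequences ((Z_{n+1}-Z_n), X_{n+1})_{n<T}, written by
   grouping the sum according to the first step (e, x) in {-1,1} x G_N:
   if z+e <= sigma_x the explorer attaches to x at that step, otherwise the
   remaining T-1 steps are explored from height z+e. *)
Fixpoint attach_within (N : nat) (sigma : nat -> nat) (i : nat) (T : nat) (z : Z)
  : R :=
  match T with
  | O => 0
  | S T' =>
      rsum N (fun x =>
        let v (z' : Z) : R :=
          if Z.leb z' (Z.of_nat (sigma x))
          then (if Nat.eqb x i then 1 else 0)
          else attach_within N sigma i T' z' in
        / (2 * INR N) * (v (z - 1)%Z + v (z + 1)%Z))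
  end.

(* The attachment probability P(explorer attaches to pile i | sigma) is the
   limit as T -> oo of attach_within N sigma i T (explorer_start N sigma)
   (continuity of probability along the increasing events {n* <= T, X_{n*}=i}). *)

(* Main.v *)
Require Import Defs.
From Stdlib Require Import Reals ZArith Lra Lia Psatz.
Open Scope R_scope.

Lemma rsum_ext n f g : (forall x, (x < n)%nat -> f x = g x) -> rsum n f = rsum n g.
Proof. induction n; simpl; intros H; [reflexivity|]. rewrite IHn by (intros; apply H; lia). rewrite H by lia. reflexivity. Qed.

Lemma rsum_le n f g : (forall x, (x < n)%nat -> f x <= g x) -> rsum n f <= rsum n g.
Proof. induction n; simpl; intros H; [lra|]. assert (H1 := H n ltac:(lia)). assert (rsum n f <= rsum n g) by (apply IHn; intros; apply H; lia). lra. Qed.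

Lemma rsum_plus n f g : rsum n (fun x => f x + g x) = rsum n f + rsum n g.
Proof. induction n; simpl; [lra|]. rewrite IHn. lra. Qed.

Lemma rsum_scal n c f : rsum n (fun x => c * f x) = c * rsum n f.
Proof. induction n; simpl; [lra|]. rewrite IHn. lra. Qed.

Lemma rsum_const n c : rsum n (fun _ => c) = INR n * c.
Proof. induction n; simpl rsum; [simpl; lra|]. rewrite IHn, S_INR. lra. Qed.

Lemma rsum_nonneg n f : (forall x, (x < n)%nat -> 0 <= f x) -> 0 <= rsum n f.
Proof. intros H. apply Rle_trans with (rsum n (fun _ => 0)). rewrite rsum_const; lra. apply rsum_le; auto. Qed.

Lemma rsum_swap n m (f : nat -> nat -> R) :
  rsum n (fun a => rsum m (fun b => f a b)) = rsum m (fun b => rsum n (fun a => f a b)).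
Proof. induction n; simpl. - induction m; simpl; [lra|]. rewrite <- IHm. lra.
  - rewrite IHn. rewrite <- rsum_plus. reflexivity. Qed.

Lemma rsum_delta n i f : (i < n)%nat -> rsum n (fun x => if Nat.eqb x i then f x else 0) = f i.
Proof. induction n as [|n IHn]; intros H; [lia|]. simpl. destruct (Nat.eqb n i) eqn:E.
  - apply Nat.eqb_eq in E; subst i. rewrite (rsum_ext _ _ (fun _ => 0)).
    rewrite rsum_const; lra. intros x Hx. destruct (Nat.eqb x n) eqn:E2; auto. apply Nat.eqb_eq in E2; lia.
  - apply Nat.eqb_neq in E. rewrite IHn by lia. lra. Qed.

Section Walk.
Variable N : nat.
Variable sigma : nat -> nat.
Variable i : nat.
Hypothesis HN : (2 <= N)%nat.
Hypothesis Hi : (i < N)%nat.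

Definition ind (z : Z) (x : nat) : R := if Z.leb z (Z.of_nat (sigma x)) then 1 else 0.
Definition cnt (z : Z) : R := rsum N (ind z).
Definition Qc (z : Z) : R := INR N - cnt z.
Definition Aa (z : Z) : R := ind z i.
Definition uu (T : nat) (z : Z) : R := attach_within N sigma i T z.

Lemma INR_N_pos : 0 < INR N.
Proof. apply lt_0_INR; lia. Qed.

Lemma ind_01 z x : 0 <= ind z x <= 1.
Proof. unfold ind; destruct (Z.leb _ _); lra. Qed.

Lemma cnt_bounds z : 0 <= cnt z <= INR N.
Proof. unfold cnt; split. apply rsum_nonneg; intros; apply ind_01.
  rewrite <- (Rmult_1_r (INR N)), <- rsum_const. apply rsum_le; intros; apply ind_01. Qed.

Lemma cnt_ge_A z : Aa z <= cnt z.
Proof. unfold cnt, Aa. rewrite <- (rsum_delta N i (ind z)) by auto.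
  apply rsum_le. intros x _. destruct (Nat.eqb x i); [lra| apply ind_01]. Qed.

Lemma sum_v z U : rsum N (fun x => if Z.leb z (Z.of_nat (sigma x)) then (if Nat.eqb x i then 1 else 0) else U)
  = Aa z + Qc z * U.
Proof.
  rewrite (rsum_ext _ _ (fun x => (if Nat.eqb x i then ind z x else 0) + (1 - ind z x) * U)).
  - rewrite rsum_plus, rsum_delta by auto. unfold Aa, Qc, cnt. f_equal.
    rewrite (rsum_ext _ _ (fun x => U * 1 + (-U) * ind z x)) by (intros; ring).
    rewrite rsum_plus, !rsum_scal, rsum_const. ring.
  - intros x _. unfold ind. destruct (Z.leb _ _); destruct (Nat.eqb x i); ring.
Qed.

Lemma uu_rec T z : uu (S T) z =
  / (2 * INR N) * ((Aa (z-1) + Qc (z-1) * uu T (z-1)) + (Aa (z+1) + Qc (z+1) * uu T (z+1))).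
Proof.
  unfold uu. simpl attach_within.
  cbv zeta.
  rewrite rsum_scal, rsum_plus, !sum_v. reflexivity.
Qed.

Lemma Qc_bounds z : 0 <= Qc z <= INR N.
Proof. unfold Qc; pose proof (cnt_bounds z); lra. Qed.

Lemma AQ_le z : Aa z + Qc z <= INR N.
Proof. unfold Qc; pose proof (cnt_ge_A z); lra. Qed.

Lemma Aa_nonneg z : 0 <= Aa z.
Proof. apply ind_01. Qed.

Lemma uu_bounds T : forall z, 0 <= uu T z <= 1.
Proof.
  induction T; intros z. unfold uu; simpl; lra.
  rewrite uu_rec. pose proof INR_N_pos.
  destruct (IHT (z-1)%Z), (IHT (z+1)%Z).
  pose proof (Qc_bounds (z-1)); pose proof (Qc_bounds (z+1)).
  pose proof (AQ_le (z-1)); pose proof (AQ_le (z+1)).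
  pose proof (Aa_nonneg (z-1)); pose proof (Aa_nonneg (z+1)).
  assert (0 <= Qc (z-1) * uu T (z-1) <= Qc (z-1)) by (split; nra).
  assert (0 <= Qc (z+1) * uu T (z+1) <= Qc (z+1)) by (split; nra).
  set (S0 := (Aa (z-1) + Qc (z-1) * uu T (z-1) + (Aa (z+1) + Qc (z+1) * uu T (z+1)))).
  assert (0 <= S0 <= 2 * INR N) by (unfold S0; lra).
  split. apply Rmult_le_pos; [left; apply Rinv_0_lt_compat; lra| lra].
  apply Rmult_le_reg_l with (2 * INR N); [lra|]. rewrite <- Rmult_assoc, Rinv_r by lra. lra.
Qed.

Lemma uu_mono T : forall z, uu T z <= uu (S T) z.
Proof.
  induction T; intros z. unfold uu at 1; simpl attach_within. apply uu_bounds.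
  rewrite (uu_rec (S T)), (uu_rec T). pose proof INR_N_pos.
  apply Rmult_le_compat_l. left; apply Rinv_0_lt_compat; lra.
  pose proof (Qc_bounds (z-1)); pose proof (Qc_bounds (z+1)).
  pose proof (IHT (z-1)%Z); pose proof (IHT (z+1)%Z). nra.
Qed.

Lemma uu_cv z : {l | Un_cv (fun T => uu T z) l}.
Proof. apply growing_cv. intro T; apply uu_mono. exists 1. intros x [T ->]. apply uu_bounds. Qed.

Definition ul (z : Z) : R := proj1_sig (uu_cv z).

Lemma ul_cv z : Un_cv (fun T => uu T z) (ul z).
Proof. unfold ul; destruct (uu_cv z); auto. Qed.

Lemma ul_ge T z : uu T z <= ul z.
Proof. apply (growing_ineq (fun T => uu T z)). intro; apply uu_mono. apply ul_cv. Qed.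

Lemma ul_nonneg z : 0 <= ul z.
Proof. apply Rle_trans with (uu 0 z). apply uu_bounds. apply ul_ge. Qed.

Lemma cv_const c : Un_cv (fun _ => c) c.
Proof. intros e He. exists 0%nat. intros. unfold Rdist. rewrite Rminus_diag, Rabs_R0. auto. Qed.

Lemma cv_le_bound (a : nat -> R) L c : (forall n, a n <= c) -> Un_cv a L -> L <= c.
Proof. intros H Hc. destruct (Rle_dec L c); auto. exfalso.
  destruct (Hc (L - c)) as [n0 Hn]. lra. specialize (Hn n0 (le_n _)). specialize (H n0).
  unfold Rdist in Hn. apply Rabs_def2 in Hn. lra. Qed.

Lemma ul_super z :
  / (2 * INR N) * ((Aa (z-1) + Qc (z-1) * ul (z-1)) + (Aa (z+1) + Qc (z+1) * ul (z+1))) <= ul z.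
Proof.
  apply cv_le_bound with (fun T => uu (S T) z).
  - intros; apply ul_ge.
  - eapply Un_cv_ext. intro T; symmetry; apply uu_rec.
    apply CV_mult. apply cv_const. apply CV_plus; apply CV_plus; try apply cv_const;
    apply CV_mult; try apply cv_const; apply ul_cv.
Qed.

End Walk.

Lemma argmax_range (f : Z -> R) (H : nat) : (1 <= H)%nat ->
  exists z, (1 <= z <= Z.of_nat H)%Z /\ forall y, (1 <= y <= Z.of_nat H)%Z -> f y <= f z.
Proof.
  induction H as [|H IH]; intros HH; [lia|].
  destruct (Nat.eq_dec H 0) as [->|Hn].
  - exists 1%Z. split; [simpl; lia|]. intros y Hy. assert (y = 1%Z) by (simpl in Hy; lia). subst; lra.
  - destruct (IH ltac:(lia)) as [z [Hz Hm]].
    destruct (Rle_dec (f (Z.of_nat (S H))) (f z)).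
    + exists z; split; [lia|]. intros y Hy. destruct (Z.eq_dec y (Z.of_nat (S H))) as [->|]; auto.
      apply Hm; lia.
    + exists (Z.of_nat (S H)); split; [lia|]. intros y Hy. destruct (Z.eq_dec y (Z.of_nat (S H))) as [->|]; [lra|].
      specialize (Hm y ltac:(lia)). lra.
Qed.

Section MP.
Variable N : nat.
Variable sigma : nat -> nat.
Variable i : nat.
Hypothesis HN : (2 <= N)%nat.
Hypothesis Hi : (i < N)%nat.

Lemma Qc0 : Qc N sigma 0 = 0.
Proof. unfold Qc, cnt. rewrite (rsum_ext _ _ (fun _ => 1)). rewrite rsum_const; lra.
  intros x _. unfold ind. destruct (Z.leb_spec 0 (Z.of_nat (sigma x))); auto. lia. Qed.

Lemma max_principle (g : Z -> R) (H : nat) :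
  (1 <= H)%nat ->
  g (Z.of_nat H + 1)%Z <= 0 ->
  (forall z, (1 <= z <= Z.of_nat H)%Z -> 0 < g z ->
     g z <= / (2 * INR N) * ((Aa sigma i (z-1)%Z + Qc N sigma (z-1)%Z * g (z-1)%Z) +
                              (Aa sigma i (z+1)%Z + Qc N sigma (z+1)%Z * g (z+1)%Z))) ->
  forall z, (1 <= z <= Z.of_nat H)%Z -> g z <= ul N sigma i HN Hi z.
Proof.
  intros HH Hbd Hsub.
  set (w := fun z => g z - ul N sigma i HN Hi z).
  destruct (argmax_range w H HH) as [zs [Hzs Hmax]].
  assert (Hpos : 0 < INR N) by (apply lt_0_INR; lia).
  destruct (Rle_dec (w zs) 0) as [Hle|Hgt].
  { intros z Hz. specialize (Hmax z Hz). unfold w in *. lra. }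
  exfalso. set (m := w zs) in *. apply Rnot_le_lt in Hgt.
  assert (Hstep : forall z, (1 <= z <= Z.of_nat H)%Z -> w z = m -> (2 <= z)%Z /\ w (z-1)%Z = m).
  { intros z Hz Hwz.
    assert (Hg : 0 < g z) by (unfold w in Hwz; pose proof (ul_nonneg N sigma i HN Hi z); lra).
    specialize (Hsub z Hz Hg). pose proof (ul_super N sigma i HN Hi z) as Hu.
    assert (Hq1 := Qc_bounds N sigma (z-1)%Z). assert (Hq2 := Qc_bounds N sigma (z+1)%Z).
    assert (Hw2 : Qc N sigma (z+1)%Z * w (z+1)%Z <= INR N * m).
    { destruct (Z.eq_dec z (Z.of_nat H)) as [->|Hne].
      - assert (w (Z.of_nat H + 1)%Z <= 0) by (unfold w; pose proof (ul_nonneg N sigma i HN Hi (Z.of_nat H + 1)); lra).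
        nra.
      - assert (w (z+1)%Z <= m) by (apply Hmax; lia).
        destruct (Rle_dec 0 (w (z+1)%Z)); nra. }
    assert (Hkey : INR N * m <= Qc N sigma (z-1)%Z * w (z-1)%Z).
    { assert (E: w z <= / (2 * INR N) * (Qc N sigma (z-1)%Z * w (z-1)%Z + Qc N sigma (z+1)%Z * w (z+1)%Z)).
      { unfold w. rewrite Rmult_plus_distr_l in *. unfold w in Hw2.
        assert (/ (2 * INR N) * (Qc N sigma (z - 1)%Z * (g (z - 1)%Z - ul N sigma i HN Hi (z - 1)%Z)) =
                / (2 * INR N) * (Aa sigma i (z - 1)%Z + Qc N sigma (z - 1)%Z * g (z - 1)%Z) -
                / (2 * INR N) * (Aa sigma i (z - 1)%Z + Qc N sigma (z - 1)%Z * ul N sigma i HN Hi (z - 1)%Z)) by ring.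
        assert (/ (2 * INR N) * (Qc N sigma (z + 1)%Z * (g (z + 1)%Z - ul N sigma i HN Hi (z + 1)%Z)) =
                / (2 * INR N) * (Aa sigma i (z + 1)%Z + Qc N sigma (z + 1)%Z * g (z + 1)%Z) -
                / (2 * INR N) * (Aa sigma i (z + 1)%Z + Qc N sigma (z + 1)%Z * ul N sigma i HN Hi (z + 1)%Z)) by ring.
        lra. }
      rewrite Hwz in E.
      apply Rmult_le_compat_l with (r := 2 * INR N) in E; [|lra].
      rewrite <- Rmult_assoc, Rinv_r, Rmult_1_l in E by lra. lra. }
    destruct (Z.eq_dec z 1) as [->|Hz1].
    - simpl in Hkey. rewrite Qc0 in Hkey. nra.
    - split; [lia|].
      assert (w (z-1)%Z <= m) by (apply Hmax; lia).
      destruct (Rle_dec (w (z-1)%Z) 0). nra.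
      assert (Qc N sigma (z-1)%Z * w (z-1)%Z <= INR N * w (z-1)%Z) by nra. nra. }
  assert (Hall : forall k : nat, forall z, Z.of_nat k = z -> (1 <= z <= Z.of_nat H)%Z -> w z = m -> False).
  { induction k; intros z Hk Hz Hw. lia.
    destruct (Hstep z Hz Hw) as [H2 H3]. apply (IHk (z-1)%Z); auto; lia. }
  apply (Hall (Z.to_nat zs) zs); auto; lia.
Qed.

End MP.

Fixpoint rprod (n : nat) (f : nat -> R) : R :=
  match n with O => 1 | S k => rprod k f * f k end.

Lemma rprod_ext n f g : (forall x, (x < n)%nat -> f x = g x) -> rprod n f = rprod n g.
Proof. induction n; simpl; intros H; [reflexivity|]. rewrite IHn by (intros; apply H; lia). rewrite H by lia. reflexivity. Qed.

Lemma rprod_bounds n f : (forall x, (x < n)%nat -> 0 <= f x <= 1) -> 0 <= rprod n f <= 1.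
Proof. induction n; simpl; intros H; [lra|]. destruct (IHn ltac:(intros; apply H; lia)). destruct (H n ltac:(lia)). split; nra. Qed.

Lemma rprod_nonneg n f : (forall x, (x < n)%nat -> 0 <= f x) -> 0 <= rprod n f.
Proof. induction n; simpl; intros H; [lra|]. apply Rmult_le_pos. apply IHn; intros; apply H; lia. apply H; lia. Qed.

Lemma rprod_mult n f g : rprod n (fun e => f e * g e) = rprod n f * rprod n g.
Proof. induction n; simpl; [ring|]. rewrite IHn; ring. Qed.

Lemma rprod_exp n f : rprod n (fun e => exp (f e)) = exp (rsum n f).
Proof. induction n; simpl. rewrite exp_0; auto. rewrite IHn, exp_plus; auto. Qed.

Lemma rprod_ge n f g : (forall x, (x < n)%nat -> 0 <= g x <= f x) -> rprod n g <= rprod n f.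
Proof. induction n; simpl; intros H; [lra|].
  assert (0 <= rprod n g) by (apply rprod_nonneg; intros; apply H; lia).
  assert (rprod n g <= rprod n f) by (apply IHn; intros; apply H; lia).
  destruct (H n ltac:(lia)). apply Rmult_le_compat; auto. Qed.

Lemma rprod_shift0 n f : rprod (S n) f = f 0%nat * rprod n (fun e => f (S e)).
Proof. induction n. simpl; ring. change (rprod (S (S n)) f) with (rprod (S n) f * f (S n)).
  rewrite IHn. simpl. ring. Qed.

Lemma rsum_shift0 n f : rsum (S n) f = f 0%nat + rsum n (fun e => f (S e)).
Proof. induction n. simpl; ring. change (rsum (S (S n)) f) with (rsum (S n) f + f (S n)).
  rewrite IHn. simpl. ring. Qed.

Definition bi (b : bool) : R := if b then 1 else 0.

Lemma count_le c h L : rsum L (fun t => bi (Nat.leb (c + t) h)) <= INR (h + 1 - c).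
Proof.
  assert (forall L, rsum L (fun t => bi (Nat.leb (c + t) h)) <= INR (Nat.min L (h + 1 - c))).
  { induction L0; simpl rsum. simpl; lra.
    unfold bi at 2. destruct (Nat.leb_spec (c + L0) h).
    - replace (Nat.min (S L0) (h+1-c)) with (S (Nat.min L0 (h+1-c))) by lia. rewrite S_INR; lra.
    - apply Rle_trans with (INR (Nat.min L0 (h + 1 - c))). lra. apply le_INR; lia. }
  apply Rle_trans with (INR (Nat.min L (h + 1 - c))); auto. apply le_INR; lia.
Qed.

Lemma tri_sum A D : rsum D (fun e => INR (A - e)) <= INR A * (INR A + 1) / 2.
Proof.
  assert (forall D, rsum D (fun e => INR (A - e)) + INR (A - D) * (INR (A - D) + 1) / 2 <= INR A * (INR A + 1) / 2).
  { induction D0; simpl rsum. rewrite Nat.sub_0_r; lra.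
    destruct (Nat.le_gt_cases A D0).
    - replace (A - S D0)%nat with 0%nat in * by lia. replace (A - D0)%nat with 0%nat in * by lia. simpl in *. lra.
    - replace (A - D0)%nat with (S (A - S D0)) in IHD0 by lia. rewrite S_INR in IHD0.
      replace (A - D0)%nat with (S (A - S D0)) by lia. rewrite S_INR. nra. }
  specialize (H D). assert (0 <= INR (A - D) * (INR (A - D) + 1) / 2). pose proof (pos_INR (A - D)). nra. lra.
Qed.

Lemma nmax_ge n f : forall x, (x < n)%nat -> (f x <= nmax n f)%nat.
Proof. induction n; intros x Hx; [lia|]. simpl. destruct (Nat.eq_dec x n) as [->|]. lia.
  specialize (IHn x ltac:(lia)). lia. Qed.

Lemma rsum_INR_nsum n f : rsum n (fun x => INR (f x)) = INR (nsum n f).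
Proof. induction n; simpl; auto. rewrite IHn, plus_INR. auto. Qed.

Section Core.
Variable N : nat.
Variable sigma : nat -> nat.
Variable i : nat.
Hypothesis HN : (2 <= N)%nat.
Hypothesis Hi : (i < N)%nat.
Hypothesis Hsum : INR (nsum N sigma) < INR N / 2.

Definition M := nmax N sigma.
Definition s := sigma i.
Definition p (z : Z) := cnt N sigma z / INR N.
Definition q (z : Z) := 1 - p z.
Definition pn (j : nat) := p (Z.of_nat j).
Definition Lam := rsum N (fun x => INR (sigma x) * (INR (sigma x) + 1)) / INR N.

Lemma Npos : 0 < INR N.
Proof. apply lt_0_INR; lia. Qed.

Lemma ind_nat j x : ind sigma (Z.of_nat j) x = bi (Nat.leb j (sigma x)).
Proof. unfold ind, bi. destruct (Z.leb_spec (Z.of_nat j) (Z.of_nat (sigma x))), (Nat.leb_spec j (sigma x)); auto; lia. Qed.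

Lemma p_bounds z : 0 <= p z <= 1.
Proof. unfold p. pose proof (cnt_bounds N sigma z). pose proof Npos. split.
  apply Rmult_le_pos; [lra| left; apply Rinv_0_lt_compat; lra].
  apply Rmult_le_reg_l with (INR N); auto. unfold Rdiv; rewrite <- Rmult_assoc, Rinv_r_simpl_m by lra. lra. Qed.

Lemma q_bounds z : 0 <= q z <= 1.
Proof. unfold q; pose proof (p_bounds z); lra. Qed.

Lemma p_mono z1 z2 : (z1 <= z2)%Z -> p z2 <= p z1.
Proof. intros H. unfold p, Rdiv. apply Rmult_le_compat_r. left; apply Rinv_0_lt_compat, Npos.
  unfold cnt. apply rsum_le. intros x _. unfold ind.
  destruct (Z.leb_spec z2 (Z.of_nat (sigma x))), (Z.leb_spec z1 (Z.of_nat (sigma x))); lra || lia. Qed.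

Lemma p_zero z : (Z.of_nat M < z)%Z -> p z = 0.
Proof. intros H. unfold p, cnt. rewrite (rsum_ext _ _ (fun _ => 0)). rewrite rsum_const. unfold Rdiv; ring.
  intros x Hx. unfold ind. pose proof (nmax_ge N sigma x Hx). fold M in H0.
  destruct (Z.leb_spec z (Z.of_nat (sigma x))); auto. lia. Qed.

Lemma p_half z : (1 <= z)%Z -> p z <= 1/2.
Proof. intros H. unfold p. pose proof Npos.
  assert (cnt N sigma z <= INR (nsum N sigma)).
  { rewrite <- rsum_INR_nsum. unfold cnt. apply rsum_le. intros x _. unfold ind.
    destruct (Z.leb_spec z (Z.of_nat (sigma x))). apply (le_INR 1). lia. apply pos_INR. }
  apply Rmult_le_reg_l with (INR N); auto. unfold Rdiv; rewrite <- Rmult_assoc, Rinv_r_simpl_m by lra. lra. Qed.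

Lemma Qc_q z : Qc N sigma z = INR N * q z.
Proof. unfold Qc, q, p. pose proof Npos. field. lra. Qed.

Lemma Lam_nonneg : 0 <= Lam.
Proof. unfold Lam. apply Rmult_le_pos. apply rsum_nonneg; intros. pose proof (pos_INR (sigma x)); nra.
  left; apply Rinv_0_lt_compat, Npos. Qed.

Lemma p_pile_bound j (c : R) : (forall h, (j <= h)%nat -> c <= INR h * (INR h + 1)) -> 0 <= c -> pn j * c <= Lam.
Proof. intros Hc Hc0. unfold pn, p, Lam, cnt. unfold Rdiv. rewrite Rmult_comm, <- Rmult_assoc.
  apply Rmult_le_compat_r. left; apply Rinv_0_lt_compat, Npos.
  rewrite <- rsum_scal. apply rsum_le. intros x _. rewrite ind_nat. unfold bi.
  destruct (Nat.leb_spec j (sigma x)). rewrite Rmult_1_r; auto. pose proof (pos_INR (sigma x)); nra. Qed.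

Lemma pL1 b : (1 <= b)%nat -> pn b * (INR b * (INR b + 1)) <= Lam.
Proof. intros Hb. apply p_pile_bound. intros h Hh. apply le_INR in Hh. pose proof (pos_INR b). nra.
  pose proof (pos_INR b); nra. Qed.

Lemma pL2 : INR (s+1) * pn (s+2) <= Lam.
Proof. rewrite Rmult_comm. apply p_pile_bound. intros h Hh. apply le_INR in Hh. rewrite plus_INR in *.
  simpl in *. pose proof (pos_INR s). nra. apply pos_INR. Qed.


Definition w (j : nat) := 2 * pn j + pn (j + 2).
Definition Xs (k : nat) := rsum (S M) (fun t => w (k + t)).
Definition r (j : nat) := q (Z.of_nat j) / (1 + pn (j + 2)).
Definition th (k : nat) := rprod (S M) (fun t => r (k + t)).

Lemma pn_bounds j : 0 <= pn j <= 1.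
Proof. apply p_bounds. Qed.

Lemma r_bounds j : 0 <= r j <= 1.
Proof. unfold r. pose proof (q_bounds (Z.of_nat j)). pose proof (pn_bounds (j+2)).
  split. apply Rmult_le_pos; [lra| left; apply Rinv_0_lt_compat; lra].
  apply Rmult_le_reg_l with (1 + pn (j+2)); [lra|]. unfold Rdiv. rewrite <- Rmult_assoc, Rinv_r_simpl_m by lra. lra. Qed.

Lemma r_exp j : (1 <= j)%nat -> exp (- w j) <= r j.
Proof. intros Hj. unfold r, w, q.
  pose proof (p_half (Z.of_nat j) ltac:(lia)). fold (pn j) in *. pose proof (pn_bounds j). pose proof (pn_bounds (j+2)).
  replace (- (2 * pn j + pn (j + 2))) with ((- (2 * pn j)) + (- pn (j+2))) by ring.
  rewrite exp_plus, !exp_Ropp. unfold Rdiv.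
  pose proof (exp_ineq1_le (2 * pn j)). pose proof (exp_ineq1_le (pn (j+2))).
  pose proof (exp_pos (2 * pn j)). pose proof (exp_pos (pn (j+2))).
  apply Rmult_le_compat. left; apply Rinv_0_lt_compat; lra. left; apply Rinv_0_lt_compat; lra.
  - apply Rle_trans with (/ (1 + 2 * pn j)). apply Rinv_le_contravar; lra.
    apply Rmult_le_reg_l with (1 + 2 * pn j); [lra|]. rewrite Rinv_r by lra. nra.
  - apply Rinv_le_contravar; lra.
Qed.

Lemma th_bounds k : 0 <= th k <= 1.
Proof. apply rprod_bounds; intros; apply r_bounds. Qed.

Lemma rsum_opp n f : rsum n (fun t => - f t) = - rsum n f.
Proof. rewrite (rsum_ext _ _ (fun t => (-1) * f t)) by (intros; ring). rewrite rsum_scal; ring. Qed.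

Lemma th_exp k : (1 <= k)%nat -> exp (- Xs k) <= th k.
Proof. intros Hk. unfold th, Xs. rewrite <- rsum_opp, <- rprod_exp. apply rprod_ge.
  intros t _. split. left; apply exp_pos. apply r_exp. lia. Qed.

Lemma r_one j : (M < j)%nat -> r j = 1.
Proof. intros H. unfold r, q, pn. rewrite !p_zero by lia. field. Qed.

Lemma th_rec k : th k = r k * th (S k).
Proof. unfold th. rewrite rprod_shift0. simpl rprod at 2.
  rewrite (r_one (S (k + M))) by lia. rewrite Nat.add_0_r, Rmult_1_r. f_equal. apply rprod_ext. intros; f_equal; lia. Qed.

Lemma Xs_form k : Xs k = rsum N (fun x => rsum (S M) (fun t =>
   2 * bi (Nat.leb (k+t) (sigma x)) + bi (Nat.leb (k+t+2) (sigma x)))) / INR N.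
Proof. unfold Xs. symmetry. unfold Rdiv. rewrite Rmult_comm, <- rsum_scal.
  rewrite (rsum_ext N _ (fun x => rsum (S M) (fun t => / INR N * (2 * bi (Nat.leb (k + t) (sigma x)) + bi (Nat.leb (k + t + 2) (sigma x)))))) by (intros; rewrite rsum_scal; auto).
  rewrite (rsum_swap N (S M) (fun x t => / INR N * (2 * bi (Nat.leb (k + t) (sigma x)) + bi (Nat.leb (k + t + 2) (sigma x))))).
  apply rsum_ext. intros t _. unfold w, pn, p, cnt.
  rewrite (rsum_ext N (fun x => / INR N * (2 * bi (Nat.leb (k + t) (sigma x)) + bi (Nat.leb (k + t + 2) (sigma x))))
      (fun x => 2 * / INR N * ind sigma (Z.of_nat (k+t)) x + / INR N * ind sigma (Z.of_nat (k+t+2)) x)).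
  rewrite rsum_plus, !rsum_scal. unfold Rdiv. ring.
  intros x _. rewrite !ind_nat. ring. Qed.

Lemma pile_inner c h : rsum (S M) (fun t => 2 * bi (Nat.leb (c+t) h) + bi (Nat.leb (c+t+2) h)) <= 3 * INR (h + 1 - c).
Proof. apply Rle_trans with (rsum (S M) (fun t => 3 * bi (Nat.leb (c+t) h))).
  apply rsum_le. intros t _. unfold bi. destruct (Nat.leb_spec (c+t) h), (Nat.leb_spec (c+t+2) h); try lra; lia.
  rewrite rsum_scal. pose proof (count_le c h (S M)). lra. Qed.

Lemma T1 : INR (s+1) * Xs (s+1) <= 3 * Lam.
Proof. rewrite Xs_form. unfold Lam.
  match goal with |- _ * (rsum N ?f / _) <= _ * (rsum N ?g / _) =>
    assert (Hs : rsum N (fun x => INR (s+1) * f x) <= rsum N (fun x => 3 * g x)) end.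
  2:{ rewrite !rsum_scal in Hs. unfold Rdiv. pose proof Npos.
      apply Rmult_le_compat_r with (r := / INR N) in Hs; [|left; apply Rinv_0_lt_compat; lra]. lra. }
  apply rsum_le. intros x _.
  pose proof (pile_inner (s+1) (sigma x)). pose proof (pos_INR (s+1)).
  apply Rle_trans with (INR (s+1) * (3 * INR (sigma x + 1 - (s+1)))). apply Rmult_le_compat_l; auto.
  destruct (Nat.le_gt_cases (sigma x) s).
  - replace (sigma x + 1 - (s+1))%nat with 0%nat by lia. simpl. pose proof (pos_INR (sigma x)). nra.
  - rewrite minus_INR by lia. rewrite !plus_INR in *. simpl. apply lt_INR in H1. pose proof (pos_INR s). nra.
Qed.

Lemma T2 D : rsum D (fun e => Xs (s+1+e)) <= 3/2 * Lam.
Proof. rewrite (rsum_ext _ _ (fun e => rsum N (fun x => rsum (S M) (fun t =>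
   2 * bi (Nat.leb ((s+1+e)+t) (sigma x)) + bi (Nat.leb ((s+1+e)+t+2) (sigma x)))) * / INR N)).
  2:{ intros; rewrite Xs_form; auto. }
  rewrite (rsum_ext _ _ (fun e => / INR N * rsum N (fun x => rsum (S M) (fun t =>
   2 * bi (Nat.leb ((s+1+e)+t) (sigma x)) + bi (Nat.leb ((s+1+e)+t+2) (sigma x)))))) by (intros; ring).
  rewrite rsum_scal, rsum_swap. unfold Lam.
  match goal with |- _ * rsum N ?f <= _ => 
    assert (Hs : rsum N f <= rsum N (fun x => 3/2 * (INR (sigma x) * (INR (sigma x) + 1)))) end.
  2:{ rewrite rsum_scal in Hs. pose proof Npos.
      apply Rmult_le_compat_l with (r := / INR N) in Hs; [|left; apply Rinv_0_lt_compat; lra]. unfold Rdiv. lra. }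
  apply rsum_le. intros x _.
  apply Rle_trans with (rsum D (fun e => 3 * INR ((sigma x - s) - e))).
  { apply rsum_le. intros e _. eapply Rle_trans. apply pile_inner. right. f_equal. f_equal. lia. }
  rewrite rsum_scal. pose proof (tri_sum (sigma x - s) D).
  assert (INR (sigma x - s) <= INR (sigma x)) by (apply le_INR; lia). pose proof (pos_INR (sigma x - s)). nra.
Qed.

Definition H := (2 * M + 2)%nat.
Definition a (k : nat) := INR (H - k) / INR (H - k + 1).
Definition rho (k : nat) := a k * th k.
Definition Rpr (d : nat) := rprod d (fun e => rho (s + 1 + e)).

Lemma a_bounds k : 0 <= a k <= 1.
Proof. unfold a. pose proof (pos_INR (H-k)). rewrite plus_INR. simpl. split.
  apply Rmult_le_pos; [lra| left; apply Rinv_0_lt_compat; lra].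
  apply Rmult_le_reg_l with (INR (H - k) + 1); [lra|]. unfold Rdiv. rewrite <- Rmult_assoc, Rinv_r_simpl_m by lra. lra. Qed.

Lemma a_key k : a k * (2 - a (S k)) <= 1.
Proof. unfold a. destruct (Nat.le_gt_cases H k).
  - replace (H - k)%nat with 0%nat by lia. simpl. unfold Rdiv. rewrite Rmult_0_l, Rmult_0_l. lra.
  - replace (H - k)%nat with (S (H - S k)) by lia. rewrite !plus_INR, S_INR. simpl.
    generalize (pos_INR (H - S k)); generalize (INR (H - S k)); intros d Hd.
    replace ((d + 1) / (d + 1 + 1) * (2 - d / (d + 1))) with 1. lra. field. split; apply Rgt_not_eq; lra. Qed.

Lemma rho_bounds k : 0 <= rho k <= 1.
Proof. unfold rho. pose proof (a_bounds k). pose proof (th_bounds k). split; nra. Qed.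

Lemma rho_key k : (1 <= k)%nat -> rho k * (2 - q (Z.of_nat (k+2)) * rho (S k)) <= q (Z.of_nat k).
Proof. intros Hk. unfold rho. rewrite (th_rec k). unfold r.
  pose proof (a_bounds k) as HA. pose proof (a_bounds (S k)) as HA'. pose proof (th_bounds (S k)) as HT.
  pose proof (a_key k) as Hkey. pose proof (q_bounds (Z.of_nat k)) as Hq.
  assert (Hp : 0 <= pn (k+2) <= 1) by apply pn_bounds.
  replace (q (Z.of_nat (k+2))) with (1 - pn (k+2)) by (unfold q, pn; auto).
  set (A := a k) in *. set (A' := a (S k)) in *. set (T := th (S k)) in *. set (p' := pn (k+2)) in *.
  set (Q := q (Z.of_nat k)) in *.
  assert (H1 : A * (2 - (1 - p') * (A' * T)) <= 2 - (1 - p') * T).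
  { assert (A * (2 - (1 - p') * (A' * T)) = A * (2 - A') + A * A' * (1 - (1-p') * T)) by ring.
    assert (0 <= 1 - (1-p') * T) by nra. assert (A * A' <= 1) by nra. nra. }
  assert (H2 : T * (2 - (1 - p') * T) <= 1 + p').
  { assert (0 <= (1-T)*(1-T)) by nra. assert (T * T <= 1) by nra. assert (p' * (T*T) <= p' * 1) by (apply Rmult_le_compat_l; lra). nra. }
  assert (E : A * (Q / (1 + p') * T) * (2 - (1 - p') * (A' * T)) =
              Q / (1 + p') * (T * (A * (2 - (1 - p') * (A' * T))))) by ring.
  rewrite E. clear E.
  assert (0 <= Q / (1 + p')) by (apply Rmult_le_pos; [lra| left; apply Rinv_0_lt_compat; lra]).
  apply Rle_trans with (Q / (1 + p') * (T * (2 - (1 - p') * T))).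
  apply Rmult_le_compat_l; auto. apply Rmult_le_compat_l; lra.
  apply Rle_trans with (Q / (1 + p') * (1 + p')). apply Rmult_le_compat_l; auto.
  right. field. lra.
Qed.

Lemma a_prod c D : (c + D <= H)%nat -> rprod D (fun e => a (c + e)) = INR (H - c + 1 - D) / INR (H - c + 1).
Proof. intros Hc. induction D. simpl. rewrite Nat.sub_0_r. field. rewrite plus_INR; simpl; pose proof (pos_INR (H-c)); apply Rgt_not_eq; lra.
  simpl rprod. rewrite IHD by lia. unfold a.
  replace (H - c + 1 - D)%nat with (H - (c + D) + 1)%nat by lia.
  replace (H - c + 1 - S D)%nat with (H - (c + D))%nat by lia.
  field. rewrite !plus_INR; simpl; pose proof (pos_INR (H - (c+D))); pose proof (pos_INR (H - c)); split; apply Rgt_not_eq; lra. Qed.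

Lemma R_nonneg d : 0 <= Rpr d.
Proof. apply rprod_nonneg. intros; apply rho_bounds. Qed.

Lemma R_zero D : (H < s + 1 + D)%nat -> Rpr D = 0.
Proof. induction D; intros HD. unfold H, M in *. pose proof (nmax_ge N sigma i Hi). unfold s in *. lia.
  unfold Rpr; simpl rprod; fold (Rpr D). destruct (Nat.lt_ge_cases H (s+1+D)). rewrite IHD by auto; ring.
  replace (s+1+D)%nat with H by lia. unfold rho, a. rewrite Nat.sub_diag. simpl. unfold Rdiv. ring. Qed.

Definition n := (s + 1)%nat.
Definition del := 1 - q (Z.of_nat (n + 1)) * rho n.

Lemma M_ge_s : (s <= M)%nat.
Proof. apply nmax_ge; auto. Qed.

Lemma del_bounds : 0 <= del <= 1.
Proof. unfold del. pose proof (q_bounds (Z.of_nat (n+1))). pose proof (rho_bounds n). split; nra. Qed.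

Lemma del_bound : INR n * del <= 1 + 4 * Lam.
Proof.
  unfold del, rho. pose proof (q_bounds (Z.of_nat (n+1))) as Hx. pose proof (a_bounds n) as Hy. pose proof (th_bounds n) as Ht.
  assert (Hn : 0 <= INR n) by apply pos_INR.
  assert (E1 : 1 - q (Z.of_nat (n+1)) * (a n * th n) <= (1 - q (Z.of_nat (n+1))) + (1 - a n) + (1 - th n)).
  { revert Hx Hy Ht. generalize (q (Z.of_nat (n+1))) (a n) (th n). intros x y t Hx Hy Ht.
    assert (x * (1 - y) <= 1 - y) by nra. assert (x * y <= 1) by nra. assert (0 <= x * y) by nra.
    assert (x * y * (1 - t) <= 1 - t) by nra. nra. }
  assert (E2 : INR n * (1 - q (Z.of_nat (n+1))) <= Lam).
  { unfold q. replace (Z.of_nat (n+1)) with (Z.of_nat (s+2)) by (unfold n; f_equal; lia). fold (pn (s+2)).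
    replace (1 - (1 - pn (s+2))) with (pn (s+2)) by ring. unfold n. apply pL2. }
  assert (E3 : INR n * (1 - a n) <= 1).
  { unfold a. pose proof M_ge_s. unfold H.
    replace (2 * M + 2 - n + 1)%nat with (S (2 * M + 2 - n)) by (unfold n; lia).
    rewrite S_INR. pose proof (pos_INR (2*M+2-n)).
    assert (INR n <= INR (2 * M + 2 - n) + 1) by (rewrite <- S_INR; apply le_INR; unfold n; lia).
    replace (INR n * (1 - INR (2 * M + 2 - n) / (INR (2 * M + 2 - n) + 1))) with (INR n / (INR (2 * M + 2 - n) + 1)) by (field; lra).
    apply Rmult_le_reg_r with (INR (2 * M + 2 - n) + 1); [lra|]. unfold Rdiv. rewrite Rmult_assoc, Rinv_l by lra. lra. }
  assert (E4 : INR n * (1 - th n) <= 3 * Lam).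
  { pose proof (th_exp n ltac:(unfold n; lia)). pose proof (exp_ineq1_le (- Xs n)).
    pose proof T1. fold n in H2. nra. }
  nra.
Qed.

Definition Bb := 1 + 4 * Lam.
Definition kk := Z.to_nat (up (4 * Bb)).

Lemma kk_facts : 4 * Bb <= INR kk <= 4 * Bb + 1 /\ (1 <= kk)%nat.
Proof. unfold kk. destruct (archimed (4 * Bb)) as [H1 H2]. pose proof Lam_nonneg. unfold Bb in *.
  assert (0 < IZR (up (4 * (1 + 4 * Lam)))) by lra. apply lt_0_IZR in H3.
  rewrite INR_IZR_INZ, Z2Nat.id by lia. split. lra.
  assert (1 <= Z.to_nat (up (4 * (1 + 4 * Lam))))%nat by lia. lia. Qed.

Definition hh := ((n + 1) / 2)%nat.
Definition mm := Nat.max 1 (Nat.min hh (n / kk)).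
Definition bb := (n + 1 - mm)%nat.

Lemma mm_facts : (1 <= mm)%nat /\ (mm <= bb)%nat /\ (1 <= bb)%nat /\ (bb <= n)%nat /\ (mm + bb = n + 1)%nat /\
  (mm = 1%nat \/ (mm * kk <= n)%nat) /\ (n <= 2 * kk * mm)%nat.
Proof.
  destruct kk_facts as [_ Hk].
  assert (Hh1 : (2 * hh <= n + 1)%nat) by (unfold hh; apply Nat.Div0.mul_div_le; lia).
  assert (Hh2 : (n + 1 < 2 * hh + 2)%nat).
  { unfold hh. pose proof (Nat.div_mod (n+1) 2 ltac:(lia)). pose proof (Nat.mod_upper_bound (n+1) 2 ltac:(lia)). lia. }
  assert (Hq1 : (kk * (n / kk) <= n)%nat) by (apply Nat.Div0.mul_div_le; lia).
  assert (Hq2 : (n < kk * (n / kk) + kk)%nat).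
  { pose proof (Nat.div_mod n kk ltac:(lia)). pose proof (Nat.mod_upper_bound n kk ltac:(lia)). lia. }
  assert (Hn : (1 <= n)%nat) by (unfold n; lia).
  unfold bb, mm. set (qq := (n / kk)%nat) in *.
  split; [lia|]. split; [lia|]. split; [lia|]. split; [lia|]. split; [lia|]. split; [nia|]. nia.
Qed.

Definition m := INR mm.
Definition P := pn bb.
Definition tau := if Rle_dec (4 * del * m) 1 then 2 * del * m * (m + 1) else 0.
Definition Th := / (2 * (P * (m + 1) ^ 2 + 4)).
Definition phi (y : R) := y * (2 * m + 1 - tau - y).
Definition F1 := Th * phi m.

Lemma m_ge1 : 1 <= m.
Proof. unfold m. destruct mm_facts as [H1 _]. apply (le_INR 1) in H1. simpl in H1. lra. Qed.

Lemma P_bounds : 0 <= P <= 1/2.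
Proof. unfold P. split. apply pn_bounds. apply p_half. destruct mm_facts as [_ [_ [H1 _]]]. lia. Qed.

Lemma P_bound : P * (m + 1) ^ 2 <= 4 * Lam.
Proof. unfold P, m. destruct mm_facts as [H1 [H2 [H3 _]]].
  pose proof (pL1 bb H3). pose proof (le_INR _ _ H2). pose proof (le_INR _ _ H1). simpl in H5.
  pose proof (pn_bounds bb).
  assert ((INR mm + 1)^2 <= 4 * (INR bb * (INR bb + 1))) by nra. nra. Qed.

Lemma tau_facts : 0 <= tau <= (m + 1) / 2 /\
  (P + del) * phi m + (1 - P) * (2 - tau) <= 2 * (P * (m + 1) ^ 2 + 4).
Proof.
  pose proof m_ge1. pose proof P_bounds. pose proof del_bounds. pose proof P_bound.
  unfold phi, tau. destruct (Rle_dec (4 * del * m) 1).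
  - split. split. nra. nra.
    set (t := 2 * del * m * (m + 1)).
    assert (0 <= t <= (m+1)/2) by (unfold t; split; nra).
    assert (del * (m * (2 * m + 1 - t - m)) <= t / 2) by (unfold t; nra).
    assert (m * (2 * m + 1 - t - m) <= (m+1)^2) by nra.
    assert (P * (m * (2 * m + 1 - t - m)) <= P * (m+1)^2) by (apply Rmult_le_compat_l; lra).
    assert ((1-P)*t >= t/2) by nra.
    assert (E : (P + del) * (m * (2 * m + 1 - t - m)) + (1 - P) * (2 - t) =
       P * (m * (2 * m + 1 - t - m)) + del * (m * (2 * m + 1 - t - m)) + 2 * (1 - P) - (1-P)*t) by ring.
    rewrite E. assert (0 <= P * (m+1)^2) by nra. lra.
  - assert (Hm1 : mm = 1%nat).
    { destruct mm_facts as [_ [_ [_ [_ [_ [[E|E] _]]]]]]; auto. exfalso. apply n0.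
      apply le_INR in E. rewrite mult_INR in E. destruct kk_facts as [[K1 K2] _]. pose proof del_bound. unfold Bb in *.
      fold m in E. pose proof del_bounds. pose proof Lam_nonneg.
      assert (del * (m * INR kk) <= del * INR n) by (apply Rmult_le_compat_l; lra).
      assert ((4 * del * m - 1) * INR kk <= 0) by nra.
      assert (0 < INR kk) by lra.
      destruct (Rle_dec (4 * del * m) 1); auto. exfalso. assert (0 < (4 * del * m - 1) * INR kk) by (apply Rmult_lt_0_compat; lra). lra. }
    assert (Em : m = 1) by (unfold m; rewrite Hm1; reflexivity). rewrite Em in *. split. lra. nra.
Qed.

Lemma Th_pos : 0 < Th.
Proof. unfold Th. pose proof P_bounds. apply Rinv_0_lt_compat. assert (0 <= P * (m+1)^2) by (pose proof m_ge1; nra). lra. Qed.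

Lemma phi_nonneg y : 0 <= y <= m -> 0 <= phi y.
Proof. intros Hy. unfold phi. destruct tau_facts as [[T1 T2] _]. pose proof m_ge1. nra. Qed.

Lemma phi_le y : 0 <= y -> phi y <= (m + 1) ^ 2.
Proof. intros Hy. unfold phi. destruct tau_facts as [[T1 T2] _]. pose proof m_ge1.
  pose proof (Rle_0_sqr (y - m - 1/2)). unfold Rsqr in *. assert (0 <= y * tau) by (apply Rmult_le_pos; lra). nra. Qed.

Lemma bottom_interior y qm qp Fm Fp Ap :
  1 <= y <= m - 1 -> qm * Fm >= (1 - P) * (Th * phi (y - 1)) -> qp * Fp >= (1 - P) * (Th * phi (y + 1)) -> 0 <= Ap ->
  Th * phi y <= / 2 * ((1 + qm * Fm) + (Ap + qp * Fp)).
Proof.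
  intros Hy H1 H2 H3. pose proof P_bounds. pose proof Th_pos. pose proof (phi_le y ltac:(lra)).
  assert (E : phi (y - 1) + phi (y + 1) = 2 * phi y - 2) by (unfold phi; ring).
  assert (Th * (P * (m + 1) ^ 2 + 4) = / 2) by (unfold Th; field; pose proof m_ge1; nra).
  assert (Th * (P * phi y) <= Th * (P * (m+1)^2)) by (apply Rmult_le_compat_l; nra).
  nra.
Qed.

Lemma bottom_top qm Fm Ap qpF :
  qm * Fm >= (1 - P) * (Th * phi (m - 1)) -> 0 <= Ap -> qpF = (1 - del) * (Th * phi m) ->
  Th * phi m <= / 2 * ((1 + qm * Fm) + (Ap + qpF)).
Proof.
  intros H1 H2 H3. pose proof P_bounds. pose proof Th_pos. destruct tau_facts as [_ Ht].
  assert (E : phi (m - 1) = phi m + tau - 2) by (unfold phi; ring).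
  assert (Th * (P * (m + 1) ^ 2 + 4) = / 2) by (unfold Th; field; pose proof m_ge1; nra).
  assert (Th * ((P + del) * phi m + (1 - P) * (2 - tau)) <= Th * (2 * (P * (m + 1) ^ 2 + 4))) by (apply Rmult_le_compat_l; lra).
  subst qpF. nra.
Qed.

Definition F (z : Z) : R :=
  if Z.ltb z (Z.of_nat bb) then 0
  else if Z.leb z (Z.of_nat n) then Th * phi (IZR (z - Z.of_nat bb + 1))
  else F1 * Rpr (Z.to_nat (z - Z.of_nat n)).

Lemma F_below z : (z < Z.of_nat bb)%Z -> F z = 0.
Proof. intros H0. unfold F. destruct (Z.ltb_spec z (Z.of_nat bb)); auto; lia. Qed.

Lemma F_bot z : (Z.of_nat bb <= z <= Z.of_nat n)%Z -> F z = Th * phi (IZR (z - Z.of_nat bb + 1)).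
Proof. intros H0. unfold F. destruct (Z.ltb_spec z (Z.of_nat bb)); [lia|]. destruct (Z.leb_spec z (Z.of_nat n)); auto; lia. Qed.

Lemma mm_Z : (Z.of_nat n - Z.of_nat bb + 1 = Z.of_nat mm)%Z.
Proof. destruct mm_facts as [_ [_ [_ [_ [E _]]]]]. lia. Qed.

Lemma F_topd d : F (Z.of_nat (n + d)) = F1 * Rpr d.
Proof. destruct d.
  - rewrite Nat.add_0_r. rewrite F_bot. rewrite mm_Z. unfold F1, Rpr. simpl. rewrite <- INR_IZR_INZ. fold m. ring.
    destruct mm_facts as [_ [_ [_ [H1 _]]]]. lia.
  - unfold F. destruct (Z.ltb_spec (Z.of_nat (n + S d)) (Z.of_nat bb)). destruct mm_facts as [_ [_ [_ [H1 _]]]]. lia.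
    destruct (Z.leb_spec (Z.of_nat (n + S d)) (Z.of_nat n)). lia. f_equal. f_equal. lia. Qed.

Lemma F1_nonneg : 0 <= F1.
Proof. unfold F1. pose proof Th_pos. pose proof (phi_nonneg m). pose proof m_ge1. assert (0 <= phi m) by (apply H1; lra). nra. Qed.

Lemma IZR_y_bounds z : (Z.of_nat bb <= z <= Z.of_nat n)%Z -> 1 <= IZR (z - Z.of_nat bb + 1) <= m.
Proof. intros H0. pose proof mm_Z. unfold m. rewrite INR_IZR_INZ. split; apply IZR_le; lia. Qed.

Lemma F_nonneg z : 0 <= F z.
Proof. unfold F. destruct (Z.ltb_spec z (Z.of_nat bb)). lra. destruct (Z.leb_spec z (Z.of_nat n)).
  - pose proof Th_pos. pose proof (IZR_y_bounds z ltac:(lia)). pose proof (phi_nonneg (IZR (z - Z.of_nat bb + 1)) ltac:(lra)). nra.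
  - pose proof F1_nonneg. pose proof (R_nonneg (Z.to_nat (z - Z.of_nat n))). nra. Qed.

Lemma Aa_le_s z : (z <= Z.of_nat s)%Z -> Aa sigma i z = 1.
Proof. intros H0. unfold Aa, ind. fold s. destruct (Z.leb_spec z (Z.of_nat s)); auto; lia. Qed.

Lemma q_ge z : (Z.of_nat bb <= z)%Z -> q z >= 1 - P.
Proof. intros H0. unfold q, P, pn. pose proof (p_mono _ _ H0). lra. Qed.

Lemma lower_term z : (Z.of_nat bb <= z <= Z.of_nat n)%Z ->
  q (z - 1)%Z * F (z - 1)%Z >= (1 - P) * (Th * phi (IZR (z - Z.of_nat bb + 1) - 1)).
Proof. intros H0. pose proof P_bounds. pose proof Th_pos.
  destruct (Z.eq_dec z (Z.of_nat bb)) as [E|E].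
  - rewrite F_below by lia. rewrite E. replace (Z.of_nat bb - Z.of_nat bb + 1)%Z with 1%Z by lia.
    unfold phi. replace (IZR 1 - 1) with 0 by (simpl; ring). lra.
  - rewrite F_bot by lia. replace (IZR (z - 1 - Z.of_nat bb + 1)) with (IZR (z - Z.of_nat bb + 1) - 1).
    2:{ rewrite <- minus_IZR. f_equal. lia. }
    pose proof (q_ge (z-1)%Z ltac:(lia)). pose proof (IZR_y_bounds z H0).
    pose proof (phi_nonneg (IZR (z - Z.of_nat bb + 1) - 1) ltac:(lra)).
    apply Rle_ge, Rmult_le_compat_r. apply Rmult_le_pos; lra. lra. Qed.

Lemma F_sub z : (1 <= z)%Z -> 0 < F z ->
  F z <= / 2 * ((Aa sigma i (z - 1)%Z + q (z - 1)%Z * F (z - 1)%Z) + (Aa sigma i (z + 1)%Z + q (z + 1)%Z * F (z + 1)%Z)).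
Proof.
  intros Hz Hpos. pose proof (Aa_nonneg sigma i (z+1)) as HA.
  destruct (Z.ltb_spec z (Z.of_nat bb)). rewrite F_below in Hpos by auto. lra.
  destruct (Z.leb_spec z (Z.of_nat n)).
  - rewrite Aa_le_s by (unfold n in *; lia). pose proof (lower_term z ltac:(lia)) as HL.
    rewrite (F_bot z) by lia. pose proof (IZR_y_bounds z ltac:(lia)) as Hy.
    destruct (Z.eq_dec z (Z.of_nat n)) as [E|E].
    + assert (Ey : IZR (z - Z.of_nat bb + 1) = m) by (rewrite E, mm_Z; unfold m; rewrite INR_IZR_INZ; auto).
      rewrite Ey in *. apply bottom_top; auto.
      replace (z + 1)%Z with (Z.of_nat (n + 1)) by lia. rewrite F_topd. unfold Rpr. simpl rprod.
      unfold del, F1. rewrite Nat.add_0_r. replace (s + 1)%nat with n by auto. ring.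
    + assert (Hy2 : IZR (z - Z.of_nat bb + 1) <= m - 1).
      { unfold m. rewrite INR_IZR_INZ. rewrite <- mm_Z. replace (Z.of_nat n - Z.of_nat bb + 1)%Z with ((z - Z.of_nat bb + 1) + (Z.of_nat n - z))%Z by ring.
        assert (1 <= IZR (Z.of_nat n - z)) by (apply IZR_le; lia). rewrite !plus_IZR, !minus_IZR in *. lra. }
      apply bottom_interior; auto. lra.
      rewrite F_bot by lia. replace (IZR (z + 1 - Z.of_nat bb + 1)) with (IZR (z - Z.of_nat bb + 1) + 1).
      2:{ rewrite <- plus_IZR. f_equal. lia. }
      pose proof P_bounds. pose proof Th_pos. pose proof (q_ge (z+1)%Z ltac:(lia)).
      pose proof (phi_nonneg (IZR (z - Z.of_nat bb + 1) + 1) ltac:(lra)).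
      apply Rle_ge, Rmult_le_compat_r. apply Rmult_le_pos; lra. lra.
  - pose proof (Aa_nonneg sigma i (z-1)) as HA'.
    set (d := Z.to_nat (z - Z.of_nat n)). assert (Hd : (1 <= d)%nat) by (unfold d; lia).
    destruct d as [|d'] eqn:Ed. lia.
    assert (Ez : z = Z.of_nat (n + S d')) by (rewrite <- Ed; unfold d; lia).
    rewrite Ez. rewrite F_topd.
    replace (Z.of_nat (n + S d') - 1)%Z with (Z.of_nat (n + d')) by lia. rewrite F_topd.
    replace (Z.of_nat (n + S d') + 1)%Z with (Z.of_nat (n + S (S d'))) by lia. rewrite F_topd.
    unfold Rpr. simpl rprod. fold (Rpr d').
    set (k := (s + 1 + d')%nat).
    replace (s + 1 + S d')%nat with (S k) by (unfold k; lia).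
    replace (Z.of_nat (n + d')) with (Z.of_nat k) in * by (unfold k, n; f_equal; lia).
    replace (Z.of_nat (n + S (S d'))) with (Z.of_nat (k + 2)) by (unfold k, n; f_equal; lia).
    pose proof (rho_key k ltac:(unfold k; lia)) as HK.
    pose proof F1_nonneg. pose proof (R_nonneg d'). set (X := F1 * Rpr d').
    assert (0 <= X) by (unfold X; nra).
    pose proof (rho_bounds k). pose proof (rho_bounds (S k)). pose proof (q_bounds (Z.of_nat k)). pose proof (q_bounds (Z.of_nat (k+2))).
    assert (X * (rho k * (2 - q (Z.of_nat (k + 2)) * rho (S k))) <= X * q (Z.of_nat k)) by (apply Rmult_le_compat_l; auto).
    pose proof (Aa_nonneg sigma i (Z.of_nat k)). pose proof (Aa_nonneg sigma i (Z.of_nat (k+2))).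
    replace (F1 * (Rpr d' * rho k)) with (X * rho k) by (unfold X; ring).
    replace (F1 * (Rpr d' * rho k * rho (S k))) with (X * rho k * rho (S k)) by (unfold X; ring). nra.
Qed.


Lemma exp_le_mono x y : x <= y -> exp x <= exp y.
Proof. intros [H0|H0]. left; apply exp_increasing; auto. subst; lra. Qed.

Lemma z0_eq : (Z.of_nat M + 1)%Z = Z.of_nat (n + (M - s)).
Proof. pose proof M_ge_s. unfold n. lia. Qed.

Lemma final_bound : (INR s ^ 2 + 1) * exp (- (3 * Lam)) / 262144 <= F (Z.of_nat M + 1).
Proof.
  rewrite z0_eq, F_topd. pose proof M_ge_s as HMs. pose proof Lam_nonneg as HL.
  assert (ER : Rpr (M - s) = rprod (M - s) (fun e => a (s + 1 + e)) * rprod (M - s) (fun e => th (s + 1 + e))).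
  { unfold Rpr, rho. apply rprod_mult. }
  assert (RA : / 2 <= rprod (M - s) (fun e => a (s + 1 + e))).
  { rewrite a_prod by (unfold H; lia). unfold H.
    replace (2 * M + 2 - (s + 1) + 1 - (M - s))%nat with (M + 2)%nat by lia.
    replace (2 * M + 2 - (s + 1) + 1)%nat with (2 * M + 2 - s)%nat by lia.
    assert (0 < INR (2 * M + 2 - s)) by (apply lt_0_INR; lia).
    assert (INR (2 * M + 2 - s) <= 2 * INR (M + 2)) by (replace (2 * INR (M + 2)) with (INR (2 * (M + 2))) by (rewrite mult_INR; simpl; ring); apply le_INR; lia).
    apply Rmult_le_reg_r with (INR (2 * M + 2 - s)); auto. unfold Rdiv. rewrite Rmult_assoc, Rinv_l by lra. lra. }
  set (E := exp (3/2 * Lam)).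
  assert (HE : 0 < E) by apply exp_pos.
  assert (RT : / E <= rprod (M - s) (fun e => th (s + 1 + e))).
  { apply Rle_trans with (exp (- rsum (M - s) (fun e => Xs (s + 1 + e)))).
    - unfold E. rewrite <- exp_Ropp. apply exp_le_mono. pose proof (T2 (M - s)). lra.
    - rewrite <- rsum_opp, <- rprod_exp. apply rprod_ge. intros e _. split. left; apply exp_pos. apply th_exp. lia. }
  assert (E3 : exp (- (3 * Lam)) = / (E * E)).
  { unfold E. rewrite <- exp_plus, <- exp_Ropp. replace (3 / 2 * Lam + 3 / 2 * Lam) with (3 * Lam) by field. reflexivity. }
  pose proof m_ge1 as Hm. pose proof P_bound as HPb. pose proof P_bounds as HP. destruct tau_facts as [[Tt1 Tt2] _].
  assert (HF1 : m * m <= 16 * (Lam + 1) * F1).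
  { assert (Eq : F1 * (2 * (P * (m + 1) ^ 2 + 4)) = phi m) by (unfold F1, Th; field; nra).
    assert (phi m >= m * (m + 1) / 2) by (unfold phi; nra).
    pose proof F1_nonneg. assert (F1 * (2 * (P * (m + 1) ^ 2 + 4)) <= F1 * (2 * (4 * Lam + 4))) by (apply Rmult_le_compat_l; nra).
    nra. }
  destruct mm_facts as [_ [_ [_ [_ [_ [_ Hn2]]]]]].
  assert (Hn2R : INR n <= 2 * INR kk * m) by (unfold m; replace (2 * INR kk * INR mm) with (INR (2 * kk * mm)) by (rewrite !mult_INR; simpl; ring); apply le_INR; lia).
  assert (Hns : INR s ^ 2 + 1 <= INR n ^ 2) by (unfold n; rewrite plus_INR; simpl; pose proof (pos_INR s); nra).
  destruct kk_facts as [[K1 K2] _]. unfold Bb in K1, K2.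
  assert (HE3 : (1 + Lam / 2) ^ 3 <= E).
  { unfold E. replace (3/2 * Lam) with (Lam/2 + Lam/2 + Lam/2) by field. rewrite !exp_plus.
    pose proof (exp_ineq1_le (Lam/2)). assert (0 <= 1 + Lam/2) by lra. simpl.
    apply Rle_trans with ((1 + Lam/2) * (1 + Lam/2) * (1 + Lam/2)). right; ring.
    pose proof (exp_pos (Lam/2)). apply Rmult_le_compat; try nra. all: try (apply Rmult_le_compat; nra). }
  assert (HK : INR kk ^ 2 * (Lam + 1) <= 2048 * E).
  { assert (0 <= INR kk <= 32 * (1 + Lam/2)) by (split; lra).
    assert (INR kk ^ 2 <= 1024 * (1 + Lam/2)^2) by nra.
    assert (Lam + 1 <= 2 * (1 + Lam/2)) by lra.
    assert (0 <= (1 + Lam/2)^2) by nra.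
    apply Rle_trans with (1024 * (1 + Lam/2)^2 * (2 * (1 + Lam/2))). apply Rmult_le_compat; nra. nra. }
  assert (Main : INR s ^ 2 + 1 <= 131072 * E * F1).
  { pose proof F1_nonneg.
    assert (INR n ^ 2 <= 4 * INR kk ^ 2 * (m * m)) by (pose proof (pos_INR n); nra).
    assert (4 * INR kk ^ 2 * (m * m) <= 4 * INR kk ^ 2 * (16 * (Lam + 1) * F1)) by (apply Rmult_le_compat_l; nra).
    assert (64 * (INR kk ^ 2 * (Lam + 1)) * F1 <= 64 * (2048 * E) * F1) by (apply Rmult_le_compat_r; nra).
    nra. }
  rewrite ER, E3.
  pose proof F1_nonneg.
  apply Rle_trans with (F1 * / 2 * / E).
  - replace (F1 * / 2 * / E) with (131072 * E * F1 * / (E * E) / 262144) by (field; lra).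
    unfold Rdiv. apply Rmult_le_compat_r. lra. apply Rmult_le_compat_r. left; apply Rinv_0_lt_compat; nra. auto.
  - rewrite <- Rmult_assoc. apply Rmult_le_compat. assert (0 < /E) by (apply Rinv_0_lt_compat; lra). nra.
    left; apply Rinv_0_lt_compat; lra. apply Rmult_le_compat_l; lra. auto.
Qed.

End Core.

Theorem lemma2p2 :
  exists kappaD C : R, 0 < kappaD /\ 0 < C /\
  forall (N : nat) (sigma : nat -> nat) (i : nat),
    (2 <= N)%nat ->
    INR (nsum N sigma) < INR N / 2 ->
    (i < N)%nat ->
    (exists l, Un_cv (fun T => attach_within N sigma i T (explorer_start N sigma)) l) /\
    (forall l, Un_cv (fun T => attach_within N sigma i T (explorer_start N sigma)) l ->
       kappaD * ((INR (sigma i) ^ 2 + 1) / INR N) *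
         exp (- (3 / INR N) * rsum N (fun j => INR (sigma j) * (INR (sigma j) + 1))
                * (1 + C * (INR (nsum N sigma) / INR N)))
       <= l).
Proof.
  exists (1 / 262144), 1. split; [lra|]. split; [lra|].
  intros N sigma i HN Hsum Hi.
  set (z0 := explorer_start N sigma).
  assert (Hcv : Un_cv (fun T => attach_within N sigma i T z0) (ul N sigma i HN Hi z0)) by exact (ul_cv N sigma i HN Hi z0).
  split. { exists (ul N sigma i HN Hi z0). exact Hcv. }
  intros l Hl. assert (El : l = ul N sigma i HN Hi z0) by (eapply UL_sequence; eauto). subst l.
  assert (HNp : 0 < INR N) by (apply lt_0_INR; lia).
  set (g := fun z => F N sigma i z / INR N).
  assert (Hg : g z0 <= ul N sigma i HN Hi z0).
  { apply (max_principle N sigma i HN Hi g (H N sigma)).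
    - unfold H; lia.
    - unfold g. replace (Z.of_nat (H N sigma) + 1)%Z with (Z.of_nat (n sigma i + (H N sigma + 1 - n sigma i))).
      rewrite (F_topd N sigma i HN Hi). rewrite (R_zero N sigma i HN Hi) by (unfold n; lia). unfold Rdiv. rewrite Rmult_0_r, Rmult_0_l. lra.
      assert (n sigma i <= H N sigma)%nat. { unfold n, H, M, s. pose proof (nmax_ge N sigma i Hi). lia. }
      lia.
    - intros z Hz Hgz. unfold g in *. rewrite !(Qc_q N sigma i HN Hi).
      assert (Fp : 0 < F N sigma i z). { unfold Rdiv in Hgz. apply Rmult_lt_reg_r with (/ INR N). apply Rinv_0_lt_compat; lra. lra. }
      pose proof (F_sub N sigma i HN Hi Hsum z ltac:(lia) Fp).
      replace (/ (2 * INR N) * (Aa sigma i (z - 1) + INR N * q N sigma (z - 1) * (F N sigma i (z - 1) / INR N) +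
          (Aa sigma i (z + 1) + INR N * q N sigma (z + 1) * (F N sigma i (z + 1) / INR N))))
        with (/ 2 * (Aa sigma i (z - 1) + q N sigma (z - 1) * F N sigma i (z - 1) +
          (Aa sigma i (z + 1) + q N sigma (z + 1) * F N sigma i (z + 1))) / INR N) by (field; lra).
      unfold Rdiv. apply Rmult_le_compat_r. left; apply Rinv_0_lt_compat; lra. auto.
    - unfold z0, explorer_start, H, M. lia. }
  apply Rle_trans with (g z0); auto.
  unfold g, z0, explorer_start. fold (M N sigma).
  pose proof (final_bound N sigma i HN Hi Hsum) as FB.
  assert (HL : 0 <= Lam N sigma) by (eapply Lam_nonneg; eauto).
  assert (Eexp : exp (- (3 / INR N) * rsum N (fun j => INR (sigma j) * (INR (sigma j) + 1)) * (1 + 1 * (INR (nsum N sigma) / INR N)))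
          <= exp (- (3 * Lam N sigma))).
  { apply exp_le_mono. unfold Lam.
    assert (0 <= INR (nsum N sigma) / INR N) by (unfold Rdiv; apply Rmult_le_pos; [apply pos_INR| left; apply Rinv_0_lt_compat; lra]).
    set (S0 := rsum N (fun x => INR (sigma x) * (INR (sigma x) + 1))).
    assert (0 <= S0 / INR N) by (fold S0 in HL; unfold Lam in HL; auto).
    replace (- (3 / INR N) * S0 * (1 + 1 * (INR (nsum N sigma) / INR N))) with (- (3 * (S0 / INR N)) * (1 + INR (nsum N sigma) / INR N)) by (field; lra).
    nra. }
  unfold s in FB.
  assert (0 <= INR (sigma i) ^ 2 + 1) by (pose proof (pos_INR (sigma i)); nra).
  apply Rle_trans with ((INR (sigma i) ^ 2 + 1) * exp (- (3 * Lam N sigma)) / 262144 / INR N).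
  - replace (1 / 262144 * ((INR (sigma i) ^ 2 + 1) / INR N) *
      exp (- (3 / INR N) * rsum N (fun j => INR (sigma j) * (INR (sigma j) + 1)) * (1 + 1 * (INR (nsum N sigma) / INR N))))
      with ((INR (sigma i) ^ 2 + 1) * exp (- (3 / INR N) * rsum N (fun j => INR (sigma j) * (INR (sigma j) + 1)) * (1 + 1 * (INR (nsum N sigma) / INR N))) / 262144 / INR N) by (field; lra).
    unfold Rdiv. apply Rmult_le_compat_r. left; apply Rinv_0_lt_compat; lra.
    apply Rmult_le_compat_r. lra. apply Rmult_le_compat_l; auto.
  - unfold Rdiv. apply Rmult_le_compat_r. left; apply Rinv_0_lt_compat; lra. exact FB.
Qed.
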